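(* For all $n,k\in\mathbb{N}$, there is a set $S$ of $n$ polygonal curves in $\mathbb{R}^1$ with $k$ vertices each such that the Voronoi diagram of $S$ under the discrete Fréchet distance has at least $\lfloor n/k\rfloor^k$ Voronoi regions, i.e. there are at least $\lfloor n/k\rfloor^k$ query curves $Q$ (with $k$ vertices in $\mathbb{R}^1$) whose nearest-neighbor sets $N_S(Q)$ are pairwise distinct.
   Context: A polygonal curve in $\mathbb{R}^d$ with $k$ vertices is a sequence $P=(p_1,\dots,p_k)$ of points of $\mathbb{R}^d$. The discrete Fréchet distance between $P=(p_1,\dots,p_k)$ and $Q=(q_1,\dots,q_l)$ is $\min_{C}\max_{(i,j)\in C}\|p_i-q_j\|$, where $C$ ranges over sequences $(i_1,j_1),\dots,(i_t,j_t)$ with $(i_1,j_1)=(1,1)$, $(i_t,j_t)=(k,l)$, and each step $(i_{s+1},j_{s+1})\in\{(i_s+1,j_s),(i_s,j_s+1),(i_s+1,j_s+1)\}$. For a finite set $S$ of curves and a query curve $Q$, $N_S(Q)$ is the set of curves in $S$ at minimum discrete Fréchet distance from $Q$. A Voronoi region of $S$ is a nonempty set of query curves sharing a common nearest-neighbor set $N_S(Q)$. *)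

(* Defs.v *)
From HB Require Import structures.
From mathcomp Require Import all_boot all_order all_algebra.
From mathcomp Require Import boolp classical_sets reals.
Set Implicit Arguments. Unset Strict Implicit. Unset Printing Implicit Defensive.
Import Order.TTheory GRing.Theory Num.Theory.
Local Open Scope ring_scope.
Local Open Scope classical_set_scope.

(* A polygonal curve in R^1 is the sequence of its vertices (a seq R);
   it has k vertices iff its size is k.  Vertices are 0-indexed here:
   p_1..p_k of the paper are nth 0 P 0 .. nth 0 P (k-1). *)

Definition coupling_step (a b : nat * nat) : bool :=
  [|| b == (a.1.+1, a.2), b == (a.1, a.2.+1) | b == (a.1.+1, a.2.+1)].

Definition is_coupling (k l : nat) (C : seq (nat * nat)) : bool :=
  match C with
  | [::] => false
  | c :: C' => [&& c == (0, 0)%N, last c C' == (k.-1, l.-1) & path coupling_step c C']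
  end.

Definition coupling_cost {R : realType} (P Q : seq R) (C : seq (nat * nat)) : R :=
  \big[Num.max/0]_(c <- C) `|nth 0 P c.1 - nth 0 Q c.2|.

Definition dfd {R : realType} (P Q : seq R) : R :=
  inf [set coupling_cost P Q C | C in [set C | is_coupling (size P) (size Q) C]].

Definition nearest_set {R : realType} (S : seq (seq R)) (Q : seq R) : set (seq R) :=
  [set P | P \in S /\ forall P', P' \in S -> dfd P Q <= dfd P' Q].

(* Main.v *)
Require Import Defs.
From HB Require Import structures.
From mathcomp Require Import all_boot all_order all_algebra.
From mathcomp Require Import boolp classical_sets reals.
From mathcomp Require Import lra zify.
Set Implicit Arguments. Unset Strict Implicit. Unset Printing Implicit Defensive.
Import Order.TTheory GRing.Theory Num.Theory.
Local Open Scope ring_scope.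
Local Open Scope classical_set_scope.

Section Gen.
Variable R : realType.
Implicit Types P Q : seq R.

Lemma cost_ge0 P Q C : 0 <= coupling_cost P Q C.
Proof. rewrite /coupling_cost; elim: C => [|c C IH]; rewrite ?big_nil ?big_cons //.
by rewrite le_max IH orbT. Qed.

Lemma cost_ge_elem P Q C c : c \in C -> `|nth 0 P c.1 - nth 0 Q c.2| <= coupling_cost P Q C.
Proof. rewrite /coupling_cost; elim: C => [|d C IH] //; rewrite in_cons big_cons.
case/orP => [/eqP->|/IH H]; rewrite le_max ?lexx //.
by rewrite H orbT. Qed.

Lemma cost_le P Q C (E : R) : 0 <= E -> (forall c, c \in C -> `|nth 0 P c.1 - nth 0 Q c.2| <= E) ->
  coupling_cost P Q C <= E.
Proof. rewrite /coupling_cost => E0; elim: C => [|d C IH] H; rewrite ?big_nil ?big_cons //.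
rewrite ge_max H ?mem_head //=; apply: IH => c Hc; by apply: H; rewrite in_cons Hc orbT. Qed.

Lemma dfd_le P Q C : is_coupling (size P) (size Q) C -> dfd P Q <= coupling_cost P Q C.
Proof. move=> HC; rewrite /dfd.
have : lbound [set coupling_cost P Q C | C in [set C | is_coupling (size P) (size Q) C]] (inf [set coupling_cost P Q C | C in [set C | is_coupling (size P) (size Q) C]]).
  apply: ge_inf; exists 0 => _ [D _ <-]; exact: cost_ge0.
by apply; exists C. Qed.

Lemma dfd_ge P Q E : (exists C, is_coupling (size P) (size Q) C) ->
  (forall C, is_coupling (size P) (size Q) C -> E <= coupling_cost P Q C) -> E <= dfd P Q.
Proof. move=> [C HC] H; apply: lb_le_inf; first by exists (coupling_cost P Q C), C.
by move=> _ [D HD <-]; apply: H. Qed.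


Lemma path_mono c s : path coupling_step c s -> forall d, d \in c :: s ->
  (d.1 <= (last c s).1)%N /\ (d.2 <= (last c s).2)%N.
Proof.
elim: s c => [|c' s IH] c /=; first by move=> _ d; rewrite inE => /eqP->.
case/andP => Hst Hp d; rewrite inE => /orP [/eqP->|Hd]; last exact: IH.
have [H1 H2] := IH c' Hp c' (mem_head _ _).
move: H1 H2; set L := last c' s => H1 H2.
move: Hst; rewrite /coupling_step => /or3P [] /eqP E; rewrite E /= in H1 H2; split; lia.
Qed.

Lemma path_cover c s a : path coupling_step c s -> (c.1 <= a <= (last c s).1)%N ->
  exists b, (a, b) \in c :: s.
Proof.
elim: s c => [|c' s IH] c /=.
  move=> _ Ha; exists c.2; rewrite inE; apply/eqP; case: c Ha => x y /=.
  by move=> H; have -> : a = x by lia.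
case/andP => Hst Hp Ha; have [E|NE] := eqVneq a c.1.
  by exists c.2; rewrite inE E -surjective_pairing eqxx.
have : (c'.1 <= a <= (last c' s).1)%N.
  move: Ha; set L := last c' s => Ha.
  move: Hst; rewrite /coupling_step => /or3P [] /eqP E; move: Ha NE; rewrite E /=; lia.
by move/(IH c' Hp) => [b Hb]; exists b; rewrite inE Hb orbT.
Qed.

Lemma coupling_head k l C : is_coupling k l C -> (0, 0)%N \in C.
Proof. by case: C => // c C /and3P [/eqP-> _ _]; rewrite mem_head. Qed.

Lemma coupling_cover k l C i : is_coupling k l C -> (0 < l)%N -> (i < k)%N ->
  exists b, (b < l)%N /\ (i, b) \in C.
Proof.
case: C => // c C /and3P [/eqP Hc /eqP Hl Hp] Hl0 Hi.
have [b Hb] : exists b, (i, b) \in c :: C.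
  apply: (path_cover Hp); rewrite Hl Hc /=; lia.
exists b; split => //; have [_ H2] := path_mono Hp Hb; rewrite Hl /= in H2; lia.
Qed.

Definition diag (k : nat) := [seq (i, i) | i <- iota 0 k].

Lemma diag_path a n : path coupling_step (a, a) [seq (i, i) | i <- iota a.+1 n] /\
  last (a, a) [seq (i, i) | i <- iota a.+1 n] = (a + n, a + n)%N.
Proof.
elim: n a => [|n IH] a /=; first by rewrite addn0.
have [H1 H2] := IH a.+1; rewrite H1 H2 addSnnS /coupling_step /= eqxx !orbT; split => //.
Qed.

Lemma diag_coupling k : (0 < k)%N -> is_coupling k k (diag k).
Proof.
case: k => // k _; rewrite /diag /= /is_coupling.
have [H1 H2] := diag_path 0 k; by rewrite H2 H1 add0n eqxx. Qed.

Lemma mem_diag k c : c \in diag k -> (c.1 < k)%N /\ c.2 = c.1.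
Proof. by case/mapP => i; rewrite mem_iota add0n => /andP [_ H] ->. Qed.

Lemma nearest_char (S : seq (seq R)) Q (D : R) :
  (forall P, P \in S -> D <= dfd P Q) -> (exists2 P0, P0 \in S & dfd P0 Q <= D) ->
  nearest_set S Q = [set P | P \in S /\ dfd P Q <= D].
Proof.
move=> Hge [P0 HP0 HD]; apply/seteqP; split => P /= [HS H]; split => //.
  exact: le_trans (H P0 HP0) HD.
by move=> P' HP'; apply: le_trans H (Hge P' HP').
Qed.

Lemma dfd_ge_coord P Q (E : R) : (0 < size P)%N -> size P = size Q ->
  (forall C, is_coupling (size P) (size Q) C -> exists2 c, c \in C & E <= `|nth 0 P c.1 - nth 0 Q c.2|) ->
  E <= dfd P Q.
Proof.
move=> HP HPQ H; apply: dfd_ge; first by exists (diag (size P)); rewrite -HPQ; apply: diag_coupling.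
by move=> C HC; have [c Hc HE] := H C HC; apply: le_trans HE (cost_ge_elem _ _ Hc).
Qed.

Lemma dfd_le_coord P Q (E : R) : (0 < size P)%N -> size P = size Q -> 0 <= E ->
  (forall i, (i < size P)%N -> `|nth 0 P i - nth 0 Q i| <= E) -> dfd P Q <= E.
Proof.
move=> HP HPQ E0 H.
have HC : is_coupling (size P) (size Q) (diag (size P)) by rewrite -HPQ; exact: diag_coupling.
apply: le_trans (dfd_le HC) _.
apply: cost_le => // c /mem_diag [Hc ->]; exact: H.
Qed.

End Gen.

Section Constr.
Variable R : realType.
Variables n k : nat.
Hypothesis hk : (1 < k)%N.

Definition mm := (n %/ k)%N.
Definition MM : R := 10 * (mm.+1)%:R.
Definition tag (p : nat) : R := p%:R / (n.+1)%:R.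
Definition xv (p i : nat) : R :=
  if i == 0%N then 0
  else if i == 1%N then
    (if (mm * k <= p)%N then (p + mm + 2)%:R
     else if (p %/ mm)%N == 0%N then - ((p %% mm)%N.+1 + mm)%:R
     else if (p %/ mm)%N == 1%N then ((p %% mm)%N.+1 + mm)%:R
     else tag p)
  else if (p < mm * k)%N && (2 <= p %/ mm)%N && (i == (p %/ mm)%N) then (p %% mm)%N.+1%:R else 0.
Definition Dv (c : nat -> nat) : R := (c 0%N + c 1%N + 3)%:R / 2 + mm%:R.
Definition yv (c : nat -> nat) (i : nat) : R :=
  if i == 0%N then Dv c else if i == 1%N then ((c 1%N)%:R - (c 0%N)%:R) / 2
  else (c i)%:R + 3/2 - Dv c.

Lemma tag_bnd p : (p < n)%N -> 0 <= tag p <= 1.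
Proof.
move=> Hp; rewrite /tag divr_ge0 ?ler0n //= ler_pdivrMr ?ltr0n // mul1r ler_nat; lia.
Qed.

Lemma accept c p i : (0 < mm)%N -> (forall g, (g < k)%N -> (c g < mm)%N) -> (p < mm * k)%N ->
  (p %% mm <= c (p %/ mm))%N -> (i < k)%N -> `|xv p i - yv c i| <= Dv c.
Proof.
move=> Hm Hc Hp Hj Hi.
have Hg : (p %/ mm < k)%N by rewrite ltn_divLR // mulnC.
have Hjm : (p %% mm < mm)%N by rewrite ltn_mod.
have Hn : (p < n)%N.
  by apply: leq_trans Hp _; rewrite /mm leq_divM.
have := Hc 0%N (ltnW hk); have := Hc 1%N hk.
have := tag_bnd Hn.
rewrite /xv /yv /Dv; set j := (p %% mm)%N%N; set g := (p %/ mm)%N.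
move: Hj; rewrite -/g -/j => Hj.
have p0 := ler0n R (c 0%N); have p1 := ler0n R (c 1%N); have pm := ler0n R mm.
have pj := ler0n R j; have pci := ler0n R (c i).
rewrite ler_norml; case: i Hi pci => [|[|i]] Hi pci /=.
  rewrite !natrD => _ _ _; apply/andP; split; lra.
  rewrite (leqNgt (mm * k) p) Hp /=.
  case: ifP => [/eqP g0|/negbT g0].
    rewrite g0 in Hj; move: Hj; rewrite -(ler_nat R) => Hj.
    rewrite !natrD -!(ltr_nat R) => h1 h2 h3; apply/andP; split; lra.
  case: ifP => [/eqP g1|/negbT g1].
    rewrite g1 in Hj; move: Hj; rewrite -(ler_nat R) => Hj.
    rewrite !natrD -!(ltr_nat R) => h1 h2 h3; apply/andP; split; lra.
  rewrite !natrD -!(ltr_nat R) => /andP [t0 t1] h2 h3; apply/andP; split; lra.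
have := Hc i.+2 Hi; rewrite -(ltr_nat R) => hci.
rewrite Hp /=.
case: ifP => [/andP [_ /eqP ig]|_].
  rewrite -ig in Hj; move: Hj; rewrite -(ler_nat R) => Hj.
  rewrite !natrD -!(ltr_nat R) => _ h2 h3; apply/andP; split; lra.
rewrite !natrD -!(ltr_nat R) => _ h2 h3; apply/andP; split; lra.
Qed.


Lemma reject c p : (0 < mm)%N -> (forall g, (g < k)%N -> (c g < mm)%N) -> (p < mm * k)%N ->
  (c (p %/ mm) < p %% mm)%N -> exists2 i, (i < k)%N & Dv c + 1/2 <= `|xv p i - yv c i|.
Proof.
move=> Hm Hc Hp Hj.
have Hg : (p %/ mm < k)%N by rewrite ltn_divLR // mulnC.
have := Hc 0%N (ltnW hk); have := Hc 1%N hk; rewrite -!(ltr_nat R) => h2 h3.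
rewrite /xv /yv /Dv; set j := (p %% mm)%N; set g := (p %/ mm)%N.
move: Hj; rewrite -/g -/j => Hj.
have p0 := ler0n R (c 0%N); have p1 := ler0n R (c 1%N); have pm := ler0n R mm.
have pj := ler0n R j.
case: (ltnP g 2) => Hg2.
  exists 1%N => //=; rewrite (leqNgt (mm * k) p) Hp /=.
  case: ifP => [/eqP g0|/negbT g0].
    rewrite g0 in Hj; move: Hj; rewrite -(ler_nat R) -natr1 => Hj.
    rewrite !natrD; rewrite ler_normr; apply/orP; right; lra.
  have g1 : g = 1%N by lia.
  rewrite g1 /= in Hj *; move: Hj; rewrite -(ler_nat R) -natr1 => Hj.
  rewrite !natrD; rewrite ler_normr; apply/orP; left; lra.
exists g => //=; have -> : (g == 0%N) = false by apply/negbTE; lia.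
have -> : (g == 1%N) = false by apply/negbTE; lia.
rewrite Hp /= eqxx.
have pcg := ler0n R (c g).
move: Hj; rewrite -(ler_nat R) -natr1 => Hj.
rewrite !natrD -natr1 ler_normr; apply/orP; left; lra.
Qed.

Definition WW : R := 2 * mm%:R + 2.

Lemma bounds c p i : (0 < mm)%N -> (forall g, (g < k)%N -> (c g < mm)%N) -> (p < mm * k)%N ->
  (i < k)%N -> [/\ `|xv p i| <= WW, `|yv c i| <= WW, 0 <= Dv c & Dv c <= WW].
Proof.
move=> Hm Hc Hp Hi.
have Hn : (p < n)%N by apply: leq_trans Hp _; rewrite /mm leq_divM.
have Hjm : (p %% mm < mm)%N by rewrite ltn_mod.
have := Hc 0%N (ltnW hk); have := Hc 1%N hk.
have := tag_bnd Hn.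
rewrite /xv /yv /Dv /WW; set j := (p %% mm)%N; set g := (p %/ mm)%N.
move: Hjm; rewrite -/j -(ltr_nat R) => Hjm.
have p0 := ler0n R (c 0%N); have p1 := ler0n R (c 1%N); have pm := ler0n R mm.
have pj := ler0n R j; have pci := ler0n R (c i).
have hci : (c i)%:R < mm%:R :> R by rewrite ltr_nat; apply: Hc.
move=> /andP [t0 t1] H2 H3.
have h2 : (c 1%N)%:R < mm%:R :> R by rewrite ltr_nat.
have h3 : (c 0%N)%:R < mm%:R :> R by rewrite ltr_nat.
rewrite !natrD.
have HD : 0 <= ((c 0%N)%:R + (c 1%N)%:R + 3) / 2 + mm%:R :> R by lra.
have HD' : ((c 0%N)%:R + (c 1%N)%:R + 3) / 2 + mm%:R <= 2 * mm%:R + 2 :> R by lra.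
split => //; last first.
- case: i Hi pci hci => [|[|i]] Hi pci hci /=; rewrite ler_norml; apply/andP; split; lra.
- case: i Hi pci hci => [|[|i]] Hi pci hci /=; first by rewrite normr0; lra.
    rewrite (leqNgt (mm * k) p) Hp /=.
    case: ifP => _; first by rewrite ler_norml ?natrD -?natr1; apply/andP; split; lra.
    case: ifP => _; first by rewrite ler_norml ?natrD -?natr1; apply/andP; split; lra.
    rewrite ler_norml; apply/andP; split; lra.
  case: ifP => _; last by rewrite normr0; lra.
  rewrite ler_norml; apply/andP; split; lra.
Qed.

Definition curveP p : seq R := mkseq (fun i => MM * i%:R + xv p i) k.
Definition curveQ c : seq R := mkseq (fun i => MM * i%:R + yv c i) k.

Lemma Dv_ge0 c : 0 <= Dv c.
Proof. by rewrite /Dv addr_ge0 ?divr_ge0 ?ler0n. Qed.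

Lemma size_curveP p : size (curveP p) = k. Proof. exact: size_mkseq. Qed.
Lemma size_curveQ c : size (curveQ c) = k. Proof. exact: size_mkseq. Qed.

Lemma dfd_anchor c p : Dv c <= dfd (curveP p) (curveQ c).
Proof.
apply: dfd_ge_coord; rewrite ?size_curveP ?size_curveQ //; first by lia.
move=> C HC; exists (0, 0)%N; first exact: coupling_head HC.
rewrite /curveP /curveQ !nth_mkseq /=; try lia.
by rewrite /xv /yv /= !mulr0 !add0r normrN ger0_norm // Dv_ge0.
Qed.

Lemma dfd_acc c p : (0 < mm)%N -> (forall g, (g < k)%N -> (c g < mm)%N) -> (p < mm * k)%N ->
  (p %% mm <= c (p %/ mm))%N -> dfd (curveP p) (curveQ c) <= Dv c.
Proof.
move=> Hm Hc Hp Hj; apply: dfd_le_coord; rewrite ?size_curveP ?size_curveQ ?Dv_ge0 //; first by lia.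
move=> i Hi; rewrite /curveP /curveQ !nth_mkseq //.
have -> : MM * i%:R + xv p i - (MM * i%:R + yv c i) = xv p i - yv c i
  by rewrite opprD addrACA subrr add0r.
exact: accept.
Qed.

Lemma dfd_rej c p : (0 < mm)%N -> (forall g, (g < k)%N -> (c g < mm)%N) -> (p < mm * k)%N ->
  (c (p %/ mm) < p %% mm)%N -> Dv c + 1/2 <= dfd (curveP p) (curveQ c).
Proof.
move=> Hm Hc Hp Hj; have [i Hi HE] := reject Hm Hc Hp Hj.
apply: dfd_ge_coord; rewrite ?size_curveP ?size_curveQ //; first by lia.
move=> C HC; have [b [Hb HbC]] := coupling_cover HC (ltn_trans (ltnSn 0) hk) Hi.
exists (i, b) => //=; rewrite /curveP /curveQ !nth_mkseq //.
have [E|NE] := eqVneq b i.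
  by rewrite E opprD addrACA subrr add0r.
have [bx1 _ _ _] := bounds Hm Hc Hp Hi.
have [_ by1 D0 D1] := bounds Hm Hc Hp Hb.
move: bx1 by1; rewrite !ler_norml => /andP [x1 x2] /andP [y1 y2].
have HM : MM = 10 * mm%:R + 10 by rewrite /MM -[(mm.+1)%:R]natr1 mulrDr mulr1.
have pm := ler0n R mm.
have M0 : 0 <= MM by rewrite HM; lra.
move: D1 x1 x2 y1 y2; rewrite /WW => D1 x1 x2 y1 y2.
case: (ltngtP i b) => Hib; last by rewrite Hib eqxx in NE.
  have : MM * (i%:R + 1) <= MM * b%:R by rewrite ler_wpM2l // natr1 ler_nat.
  rewrite mulrDr mulr1 => HMb.
  rewrite ler_normr; apply/orP; right; lra.
have : MM * (b%:R + 1) <= MM * i%:R by rewrite ler_wpM2l // natr1 ler_nat.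
rewrite mulrDr mulr1 => HMb.
rewrite ler_normr; apply/orP; left; lra.
Qed.

Definition SS : seq (seq R) := map curveP (iota 0 n).

Lemma tag_lt1 p : (p < n)%N -> tag p < 1.
Proof. by move=> Hp; rewrite /tag ltr_pdivrMr ?ltr0n // mul1r ltr_nat; lia. Qed.

Lemma tag_inj p q : tag p = tag q -> p = q.
Proof.
rewrite /tag => /(congr1 (fun x => x * (n.+1)%:R)).
by rewrite !divfK ?pnatr_eq0 // => /eqP; rewrite eqr_nat => /eqP.
Qed.

Lemma X1_class p : (p < n)%N ->
  [\/ (mm * k <= p)%N /\ xv p 1 = (p + mm + 2)%:R,
      [/\ (p < mm * k)%N, (p %/ mm)%N = 0%N & xv p 1 = - ((p %% mm)%N.+1 + mm)%:R],
      [/\ (p < mm * k)%N, (p %/ mm)%N = 1%N & xv p 1 = ((p %% mm)%N.+1 + mm)%:R] |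
      [/\ (p < mm * k)%N, (2 <= p %/ mm)%N & xv p 1 = tag p]].
Proof.
move=> Hp; rewrite /xv /=; case: leqP => H; first by apply: Or41.
case: eqP => H0; first by apply: Or42.
case: eqP => H1; first by apply: Or43.
by apply: Or44; split => //; move: H0 H1; case: (p %/ mm)%N => [|[|g]].
Qed.

Lemma X1_bnd p : (p < n)%N ->
  [\/ (mm * k <= p)%N /\ 2 + 2 * mm%:R <= xv p 1,
      [/\ (p < mm * k)%N, (p %/ mm)%N = 0%N & xv p 1 <= -1],
      [/\ (p < mm * k)%N, (p %/ mm)%N = 1%N & 1 + mm%:R <= xv p 1 <= 2 * mm%:R] |
      [/\ (p < mm * k)%N, (2 <= p %/ mm)%N & 0 <= xv p 1 < 1]].
Proof.
move=> Hp; have pm := ler0n R mm.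
case: (X1_class Hp) => [[h ->]|[h g ->]|[h g ->]|[h g ->]].
- apply: Or41; split => //; have k2 : (2 * mm <= mm * k)%N by rewrite mulnC leq_mul2l hk orbT.
  have : (2 * mm <= p)%N by lia.
  rewrite -(ler_nat R) natrM !natrD => hp; lra.
- apply: Or42; split => //; rewrite -natr1 !natrD; have := ler0n R (p %% mm)%N; lra.
- apply: Or43; split => //; have hm : (p %% mm < mm)%N by rewrite ltn_mod; lia.
  move: hm; rewrite -(ler_nat R) -natr1 !natrD -natr1 => hm.
  have := ler0n R (p %% mm)%N; move=> h0; apply/andP; split; lra.
- apply: Or44; split => //; have := tag_bnd Hp; case/andP => -> _; exact: tag_lt1.
Qed.

Lemma X1_inj p q : (p < n)%N -> (q < n)%N -> xv p 1 = xv q 1 -> p = q.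
Proof.
move=> Hp Hq E.
have pm := ler0n R mm.
have same : [\/ (mm * k <= p)%N /\ (mm * k <= q)%N,
   [/\ (p < mm * k)%N, (q < mm * k)%N, (p %/ mm)%N = 0%N & (q %/ mm)%N = 0%N],
   [/\ (p < mm * k)%N, (q < mm * k)%N, (p %/ mm)%N = 1%N & (q %/ mm)%N = 1%N] |
   [/\ (p < mm * k)%N, (q < mm * k)%N, (2 <= p %/ mm)%N & (2 <= q %/ mm)%N]].
  case: (X1_bnd Hp) => [[h1 b1]|[h1 g1 b1]|[h1 g1 b1]|[h1 g1 b1]];
  case: (X1_bnd Hq) => [[h2 b2]|[h2 g2 b2]|[h2 g2 b2]|[h2 g2 b2]];
  try by [apply: Or41|apply: Or42|apply: Or43|apply: Or44].
  all: try (exfalso; rewrite E in b1; (try move: b1 => /andP [b1 b1']); (try move: b2 => /andP [b2 b2']); lra).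
  all: try by [apply: Or42; split|apply: Or43; split|apply: Or44; split].
move: E; rewrite /xv /=.
case: same => [[h1 h2]|[h1 h2 g1 g2]|[h1 h2 g1 g2]|[h1 h2 g1 g2]].
- by rewrite h1 h2 => /eqP; rewrite eqr_nat => /eqP H; lia.
- rewrite (leqNgt _ p) (leqNgt _ q) h1 h2 /= g1 g2 /= => /eqP; rewrite eqr_opp eqr_nat => /eqP H.
  by rewrite (divn_eq p mm) (divn_eq q mm) g1 g2; lia.
- rewrite (leqNgt _ p) (leqNgt _ q) h1 h2 /= g1 g2 /= => /eqP; rewrite eqr_nat => /eqP H.
  by rewrite (divn_eq p mm) (divn_eq q mm) g1 g2; lia.
- rewrite (leqNgt _ p) (leqNgt _ q) h1 h2 /=.
  have -> : ((p %/ mm)%N == 0%N) = false by apply/negbTE; lia.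
  have -> : ((q %/ mm)%N == 0%N) = false by apply/negbTE; lia.
  have -> : ((p %/ mm)%N == 1%N) = false by apply/negbTE; lia.
  have -> : ((q %/ mm)%N == 1%N) = false by apply/negbTE; lia.
  exact: tag_inj.
Qed.

Lemma curveP_inj p q : (p < n)%N -> (q < n)%N -> curveP p = curveP q -> p = q.
Proof.
move=> Hp Hq E; apply: X1_inj => //.
have := congr1 (fun s => nth 0 s 1) E; rewrite /curveP !nth_mkseq //=.
exact: addrI.
Qed.

Lemma uniq_SS : uniq SS.
Proof.
rewrite /SS map_inj_in_uniq ?iota_uniq // => p q; rewrite !mem_iota !add0n => /andP [_ Hp] /andP [_ Hq].
exact: curveP_inj.
Qed.

Lemma in_SS p : (p < n)%N -> curveP p \in SS.
Proof. by move=> Hp; rewrite /SS map_f // mem_iota add0n. Qed.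

Lemma size_SS : size SS = n.
Proof. by rewrite size_map size_iota. Qed.

Lemma all_SS : all (fun P => size P == k) SS.
Proof. by apply/allP => P /mapP [p _ ->]; rewrite size_curveP. Qed.

Lemma nearest_SS c : (0 < mm)%N -> (forall g, (g < k)%N -> (c g < mm)%N) ->
  nearest_set SS (curveQ c) = [set P | P \in SS /\ dfd P (curveQ c) <= Dv c].
Proof.
move=> Hm Hc; apply: nearest_char.
  by move=> P /mapP [p _ ->]; exact: dfd_anchor.
have H0 : (0 < mm * k)%N by rewrite muln_gt0 Hm; lia.
exists (curveP 0); first by apply: in_SS; apply: leq_trans H0 _; rewrite /mm leq_divM.
by apply: dfd_acc => //; rewrite div0n mod0n.
Qed.

Lemma separate c c' g : (0 < mm)%N -> (forall g, (g < k)%N -> (c g < mm)%N) ->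
  (forall g, (g < k)%N -> (c' g < mm)%N) -> (g < k)%N -> (c g < c' g)%N ->
  nearest_set SS (curveQ c) <> nearest_set SS (curveQ c').
Proof.
move=> Hm Hc Hc' Hg Hlt; rewrite !nearest_SS // => E.
set p := (g * mm + c' g)%N.
have Hpg : (p %/ mm)%N = g by rewrite /p divnMDl // divn_small ?addn0 // Hc'.
have Hpj : (p %% mm)%N = c' g by rewrite /p modnMDl modn_small // Hc'.
have Hp : (p < mm * k)%N.
  rewrite /p; have := Hc' g Hg; have : (g.+1 <= k)%N by [].
  move=> h1 h2; apply: leq_trans (_ : (g.+1 * mm <= _)%N); last by rewrite mulnC leq_mul2l h1 orbT.
  by rewrite mulSn addnC ltn_add2r.
have Hn : (p < n)%N by apply: leq_trans Hp _; rewrite /mm leq_divM.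
have H := congr1 (fun A => A (curveP p)) E; simpl in H.
have HA : curveP p \in SS /\ dfd (curveP p) (curveQ c') <= Dv c'.
  split; first exact: in_SS.
  by apply: dfd_acc => //; rewrite Hpg Hpj.
rewrite -H in HA; case: HA => _ HA.
have := dfd_rej Hm Hc Hp (_ : (c (p %/ mm) < p %% mm)%N); rewrite Hpg Hpj => /(_ Hlt) HB.
have := le_trans HB HA; clear; lra.
Qed.



End Constr.

Section K1.
Variable R : realType.

Lemma dfd1 (x y : R) : dfd [:: x] [:: y] = `|x - y|.
Proof.
apply/eqP; rewrite eq_le; apply/andP; split.
  by apply: dfd_le_coord => //; case.
apply: dfd_ge_coord => // C HC; exists (0, 0)%N => //; exact: coupling_head HC.
Qed.

Definition S1 (n : nat) : seq (seq R) := map (fun p => [:: p%:R]) (iota 0 n).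

Lemma nearest_S1 n a : (a < n)%N ->
  nearest_set (S1 n) [:: a%:R] = [set P | P \in S1 n /\ dfd P [:: a%:R] <= 0].
Proof.
move=> Ha; apply: nearest_char.
  by move=> P /mapP [p _ ->]; rewrite dfd1.
exists [:: a%:R]; first by rewrite /S1 (map_f (fun p => [:: p%:R])) // mem_iota add0n.
by rewrite dfd1 subrr normr0.
Qed.

Lemma k1_case n : exists S : seq (seq R),
    [/\ uniq S, size S = n, all (fun P => size P == 1%N) S &
     exists Qs : 'I_((n %/ 1) ^ 1) -> seq R,
       (forall i, size (Qs i) = 1%N) /\
       injective (fun i => nearest_set S (Qs i))].
Proof.
exists (S1 n); split.
- by rewrite /S1 map_inj_uniq ?iota_uniq // => p q [] /eqP; rewrite eqr_nat => /eqP.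
- by rewrite size_map size_iota.
- by apply/allP => P /mapP [p _ ->].
exists (fun i => [:: (val i)%:R]); split => // a b /= E.
have Ha : (a < n)%N by have := ltn_ord a; move: (nat_of_ord a) => x; rewrite divn1 expn1.
have Hb : (b < n)%N by have := ltn_ord b; move: (nat_of_ord b) => x; rewrite divn1 expn1.
move: E; rewrite !nearest_S1 // => E; apply: val_inj; apply/eqP; apply/negPn/negP => Hab.
have H := congr1 (fun A => A [:: (val a)%:R]) E; simpl in H.
have HA : [:: (val a)%:R] \in S1 n /\ dfd [:: (val a)%:R] [:: (val a)%:R] <= (0 : R).
  by rewrite dfd1 subrr normr0; split => //; rewrite /S1 (map_f (fun p => [:: p%:R])) // mem_iota add0n.
rewrite H dfd1 in HA; case: HA => _; rewrite normr_le0 subr_eq0 eqr_nat.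
by rewrite (negbTE Hab).
Qed.

End K1.

Theorem lemma1 (R : realType) (n k : nat) (hk : (0 < k)%N) :
  exists S : seq (seq R),
    [/\ uniq S, size S = n, all (fun P => size P == k) S &
     exists Qs : 'I_((n %/ k) ^ k) -> seq R,
       (forall i, size (Qs i) = k) /\
       injective (fun i => nearest_set S (Qs i))].
Proof.
case: (ltngtP k 1) => Hk1; first by lia.
  exists (SS R n k); split; [exact: uniq_SS|exact: size_SS|exact: all_SS|].
  have E : ((n %/ k) ^ k = #|{ffun 'I_k -> 'I_(n %/ k)}|)%N by rewrite card_ffun !card_ord.
  pose F (i : 'I_((n %/ k) ^ k)) : {ffun 'I_k -> 'I_(n %/ k)} := enum_val (cast_ord E i).
  pose cd i (g : nat) : nat := odflt 0%N (omap (fun g' : 'I_k => val (F i g')) (insub g)).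
  have cdE i (g : 'I_k) : cd i g = F i g by rewrite /cd valK.
  have cdB i g : (g < k)%N -> (cd i g < n %/ k)%N.
    by move=> Hg; rewrite (cdE i (Ordinal Hg)).
  exists (fun i => curveQ R n k (cd i)); split; first by move=> i; exact: size_curveQ.
  move=> a b /= Eab.
  have Hm : (0 < mm n k)%N.
    have := ltn_ord a; move: (nat_of_ord a) => x; rewrite /mm.
    case: (n %/ k)%N => // ; rewrite exp0n; [by []|lia].
  have HF : F a = F b.
    apply/ffunP => g; apply: val_inj; case: (ltngtP (F a g) (F b g)) => // Hlt; exfalso.
      have Hl : (cd a g < cd b g)%N by rewrite !cdE.
      exact: (separate Hk1 Hm (cdB a) (cdB b) (ltn_ord g) Hl Eab).
    have Hl : (cd b g < cd a g)%N by rewrite !cdE.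
    exact: (separate Hk1 Hm (cdB b) (cdB a) (ltn_ord g) Hl (esym Eab)).


  by apply: (cast_ord_inj (eq_n := E)); apply: enum_val_inj.
subst k; exact: k1_case.
Qed.
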